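(* Let $k\geq 3$ and let $b_1,\dots,b_k$ be free generators of $\Lambda=\mathbb F_k$. Then there is $C>0$ such that for every large enough prime $p$ with $p\equiv 1\pmod 3$ there exist an onto homomorphism $\rho_p:\Lambda\rightarrow G_p$ and a set $T_p\subset G_p$ satisfying $\frac{1}{243}\leq\frac{|T_p|}{|G_p|}\leq\frac13$ and $|T_p\rho_p(b_j)\triangle T_p|\leq \frac{C}{\sqrt p}|G_p|$ for every $1\leq j\leq k$. Moreover, these can be chosen so that for every $h\in\Lambda\setminus\{e\}$ we have $\rho_p(h)\neq e$ for every large enough $p$.
   Context: $F_q$ is the field with $q$ elements. For a prime $p\equiv1\pmod 3$: $H_p=\mathrm{PSL}_2(F_p)$ acts on $\mathrm{P}^1(F_p)=F_p\cup\{\infty\}$ by linear fractional transformations, hence on $F_3^{p+1}\cong F_3^{\mathrm{P}^1(F_p)}$ by permuting coordinates ($g\cdot x=(x_{g^{-1}\cdot i})_i$); $A_p=\{(x_i)\in F_3^{p+1}\mid\sum_i x_i=0\}$ is an $H_p$-invariant subspace and $G_p=A_p\rtimes H_p$. $\triangle$ denotes symmetric difference. *)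

(* Defs.v *)
From mathcomp Require Import all_boot all_order all_algebra all_fingroup all_field.
From mathcomp Require Import algC.
Set Implicit Arguments. Unset Strict Implicit. Unset Printing Implicit Defensive.
Import GRing.Theory Num.Theory.
Local Open Scope ring_scope.

(* The projective line P^1(F_p) = F_p ∪ {∞}; None stands for ∞. *)
Definition P1 (p : nat) := option 'F_p.

Definition lft (p : nat) (a b c d : 'F_p) (z : P1 p) : P1 p :=
  match z with
  | Some x => if c * x + d == 0 then None else Some ((a * x + b) / (c * x + d))
  | None => if c == 0 then None else Some (a / c)
  end.

(* H_p = PSL_2(F_p), realised as the (faithful) image of SL_2(F_p) in Sym(P^1(F_p)). *)
Definition Hp (p : nat) : {set {perm P1 p}} :=
  [set s : {perm P1 p} | [exists a : 'F_p, [exists b : 'F_p, [exists c : 'F_p,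
     [exists d : 'F_p, (a * d - b * c == 1) && [forall z, s z == lft a b c d z]]]]]].

(* G_p = A_p ⋊ H_p, realised faithfully inside the wreath product F_3 ≀ Sym(P^1):
   the pair (x, s) with x ∈ A_p (sum-zero vector in F_3^{P^1}) and s ∈ H_p is the
   permutation (i, c) |-> (s i, c + x (s i)) of P^1(F_p) × F_3.  These permutations
   form a group isomorphic to A_p ⋊ H_p (translations = A_p, normal; the s with
   x = 0 form a complement acting on A_p by permuting coordinates). *)
Definition Gp (p : nat) : {set {perm (P1 p * 'F_3)}} :=
  [set g : {perm (P1 p * 'F_3)} | [exists s in Hp p, exists x : {ffun P1 p -> 'F_3},
     (\sum_i x i == 0) && [forall ic : P1 p * 'F_3,
        g ic == (s ic.1, ic.2 + x (s ic.1))]]].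

(* Elements of the free group F_k on generators b_0..b_{k-1}: reduced words.
   A letter (j, false) is b_j, (j, true) is b_j^{-1}. *)
Definition letter (k : nat) := ('I_k * bool)%type.

Fixpoint reduced (k : nat) (w : seq (letter k)) : bool :=
  match w with
  | x :: ((y :: _) as w') => ~~ ((x.1 == y.1) && (x.2 != y.2)) && reduced w'
  | _ => true
  end.

Definition eval_word (gT : finGroupType) (k : nat) (g : 'I_k -> gT)
    (w : seq (letter k)) : gT :=
  (\prod_(x <- w) (if x.2 then (g x.1)^-1 else g x.1))%g.

Definition symdiff (T : finType) (A B : {set T}) : {set T} := (A :\: B) :|: (B :\: A).

(* Main.v *)
Require Import Defs.
From mathcomp Require Import all_boot all_order all_algebra all_fingroup all_field.
From mathcomp Require Import algC ring zify.
Set Implicit Arguments. Unset Strict Implicit. Unset Printing Implicit Defensive.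
Import Order.TTheory GRing.Theory Num.Theory.
Local Open Scope ring_scope.

Record mx4 (R : Type) := MX { m11 : R; m12 : R; m21 : R; m22 : R }.

Section Mat.
Variable R : comNzRingType.
Definition mmul (M N : mx4 R) : mx4 R :=
  MX (m11 M * m11 N + m12 M * m21 N) (m11 M * m12 N + m12 M * m22 N)
     (m21 M * m11 N + m22 M * m21 N) (m21 M * m12 N + m22 M * m22 N).
Definition mdet (M : mx4 R) := m11 M * m22 M - m12 M * m21 M.
Definition mid : mx4 R := MX 1 0 0 1.
Definition E12 (t : R) : mx4 R := MX 1 t 0 1.
Definition E21 (t : R) : mx4 R := MX 1 0 t 1.
Lemma mdetM M N : mdet (mmul M N) = mdet M * mdet N.
Proof. by case: M => a b c d; case: N => a' b' c' d'; rewrite /mdet /=; ring. Qed.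
Lemma mmulA M N P : mmul M (mmul N P) = mmul (mmul M N) P.
Proof. case: M => a b c d; case: N => a1 b1 c1 d1; case: P => a2 b2 c2 d2; rewrite /mmul /=; f_equal; ring. Qed.
Lemma mmul1 M : mmul M mid = M.
Proof. case: M => a b c d; rewrite /mmul /=; f_equal; ring. Qed.
Lemma mmul1l M : mmul mid M = M.
Proof. case: M => a b c d; rewrite /mmul /=; f_equal; ring. Qed.
End Mat.

Definition mmap (R S : comNzRingType) (f : R -> S) (M : mx4 R) : mx4 S :=
  MX (f (m11 M)) (f (m12 M)) (f (m21 M)) (f (m22 M)).

Lemma mmapM (R S : comNzRingType) (f : {rmorphism R -> S}) M N :
  mmap f (mmul M N) = mmul (mmap f M) (mmap f N).
Proof. by rewrite /mmap /mmul /= !rmorphD !rmorphM. Qed.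
Lemma mmap_det (R S : comNzRingType) (f : {rmorphism R -> S}) M :
  mdet (mmap f M) = f (mdet M).
Proof. by rewrite /mdet /= rmorphB !rmorphM. Qed.

Definition mlft p (M : mx4 'F_p) := lft (m11 M) (m12 M) (m21 M) (m22 M).

Lemma fr1 (F : fieldType) (a b u w : F) : w != 0 -> a * (u / w) + b = (a * u + b * w) / w.
Proof. by move=> hw; field. Qed.
Lemma fr2 (F : fieldType) (n v w : F) : w != 0 -> v != 0 -> (n / w) / (v / w) = n / v.
Proof. by move=> hw hv; field; rewrite hw hv. Qed.
Lemma fr3 (F : fieldType) (a u v : F) : u != 0 -> v != 0 -> (a * u) / (v * u) = a / v.
Proof. by move=> hu hv; field; rewrite hu hv. Qed.

Lemma lft_comp p (M N : mx4 'F_p) z : mdet N != 0 ->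
  mlft M (mlft N z) = mlft (mmul M N) z.
Proof.
case: M => a b c d; case: N => a' b' c' d'; rewrite /mdet /mlft /mmul /= => hdet.
case: z => [x|] /=.
- have [w0|w0] := eqVneq (c' * x + d') 0.
  + have hab : a' * x + b' != 0.
      apply: contraNneq hdet => hab.
      have hb : b' = a' * x + b' - a' * x by ring.
      have hd : d' = c' * x + d' - c' * x by ring.
      rewrite hab sub0r in hb; rewrite w0 sub0r in hd.
      rewrite hb hd.
      by apply/eqP; ring.
    have -> : (c * a' + d * c') * x + (c * b' + d * d') = c * (a' * x + b') + d * (c' * x + d') by ring.
    rewrite /= w0 mulr0 addr0 mulf_eq0 (negbTE hab) orbF.
    case: ifP => // hc; congr Some.
    have -> : (a * a' + b * c') * x + (a * b' + b * d') = a * (a' * x + b') + b * (c' * x + d') by ring.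
    rewrite w0 mulr0 addr0 fr3 //; by rewrite hc.
  + rewrite /= fr1 // mulf_eq0 invr_eq0 (negbTE w0) orbF.
    have e1 : c * (a' * x + b') + d * (c' * x + d') = (c * a' + d * c') * x + (c * b' + d * d') by ring.
    rewrite e1; case: ifP => // hden; congr Some.
    rewrite fr1 // fr2 ?hden //.
    by congr (_ / _); ring.
- have [c0|c0] := eqVneq c' 0.
  + have ha : a' != 0 by apply: contraNneq hdet => ->; rewrite c0; apply/eqP; ring.
    rewrite /= c0 mulr0 addr0 mulf_eq0 (negbTE ha) orbF.
    case: ifP => // hc; congr Some; rewrite mulr0 addr0 fr3 //; by rewrite hc.
  + rewrite /= -[a']mulr1 fr1 // mulf_eq0 invr_eq0 (negbTE c0) orbF !mulr1.
    case: ifP => // hden; congr Some.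
    by rewrite -[a']mulr1 fr1 // mulr1 fr2 ?hden.
Qed.

Lemma lft_id p (z : P1 p) : mlft (mid _) z = z.
Proof.
case: z => [x|]; rewrite /mlft /= ?eqxx //.
by rewrite mul0r add0r mul1r addr0 divr1.
Qed.

Definition mkperm (T : finType) (f : T -> T) : {perm T} :=
  match injectiveP f with ReflectT H => perm H | ReflectF _ => 1%g end.
Lemma mkpermE (T : finType) (f : T -> T) : injective f -> mkperm f =1 f.
Proof. rewrite /mkperm; case: injectiveP => // H _ x; by rewrite permE. Qed.

Definition madj (R : comNzRingType) (M : mx4 R) := MX (m22 M) (- m12 M) (- m21 M) (m11 M).
Lemma madjM (R : comNzRingType) (M : mx4 R) : mmul (madj M) M = MX (mdet M) 0 0 (mdet M).
Proof. case: M => a b c d; rewrite /mmul /mdet /=; f_equal; ring. Qed.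
Lemma madjM' (R : comNzRingType) (M : mx4 R) : mmul M (madj M) = MX (mdet M) 0 0 (mdet M).
Proof. case: M => a b c d; rewrite /mmul /mdet /=; f_equal; ring. Qed.
Lemma madj_det (R : comNzRingType) (M : mx4 R) : mdet (madj M) = mdet M.
Proof. case: M => a b c d; rewrite /mdet /=; ring. Qed.

Section Perms.
Variable p : nat.

Lemma mlft_scal (t : 'F_p) z : t != 0 -> mlft (MX t 0 0 t) z = z.
Proof.
move=> ht; case: z => [x|]; rewrite /mlft /= ?eqxx //.
rewrite mul0r add0r (negbTE ht) addr0; congr Some; by rewrite mulrC mulKf.
Qed.

Lemma mlft_can (M : mx4 'F_p) : mdet M != 0 -> cancel (mlft M) (mlft (madj M)).
Proof. by move=> h z; rewrite lft_comp // madjM mlft_scal. Qed.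

Definition lperm (M : mx4 'F_p) : {perm P1 p} := mkperm (mlft M).
Lemma lpermE M : mdet M != 0 -> lperm M =1 mlft M.
Proof. by move=> h; apply: mkpermE; apply: can_inj (mlft_can h). Qed.

Lemma lpermM M N : mdet M != 0 -> mdet N != 0 -> (lperm N * lperm M)%g = lperm (mmul M N).
Proof.
move=> hM hN; apply/permP => z; rewrite permM !lpermE ?lft_comp // mdetM mulf_neq0 //.
Qed.

Lemma lperm1 : lperm (mid _) = 1%g.
Proof. by apply/permP => z; rewrite lpermE ?lft_id ?perm1 // /mdet /= mulr1 mulr0 subr0 oner_eq0. Qed.

Lemma lpermV M : mdet M != 0 -> (lperm M)^-1%g = lperm (madj M).
Proof.
move=> h; apply/permP => z; apply: (@perm_inj _ (lperm M)).
rewrite permKV !lpermE ?madj_det // lft_comp ?madj_det // madjM' mlft_scal //.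
Qed.

Lemma Hp_lperm M : mdet M = 1 -> lperm M \in Hp p.
Proof.
move=> h; rewrite inE; apply/existsP; exists (m11 M); apply/existsP; exists (m12 M).
apply/existsP; exists (m21 M); apply/existsP; exists (m22 M).
rewrite -/(mdet M) h eqxx /=; apply/forallP => z; rewrite lpermE ?h ?oner_eq0 //.
Qed.

Lemma Hp_mlft s : s \in Hp p -> exists2 M, mdet M = 1 & s = lperm M.
Proof.
rewrite inE => /existsP [a /existsP [b /existsP [c /existsP [d /andP [/eqP h /forallP hs]]]]].
exists (MX a b c d) => //; apply/permP => z; rewrite lpermE /mdet /= ?h ?oner_eq0 //.
exact/eqP/hs.
Qed.

Definition Pf (x : {ffun P1 p -> 'F_3}) (s : {perm P1 p}) (ic : P1 p * 'F_3) :=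
  (s ic.1, ic.2 + x (s ic.1)).
Lemma Pf_inj x s : injective (Pf x s).
Proof.
move=> [i c] [j d] E; have /= /perm_inj eij := congr1 fst E.
have /= := congr1 snd E; rewrite eij => /addIr -> //.
Qed.
Definition Pm x s := mkperm (Pf x s).
Lemma PmE x s ic : Pm x s ic = (s ic.1, ic.2 + x (s ic.1)).
Proof. by rewrite /Pm mkpermE //; apply: Pf_inj. Qed.

Lemma PmM x1 s1 x2 s2 :
  (Pm x1 s1 * Pm x2 s2)%g = Pm [ffun j => x2 j + x1 ((s2^-1)%g j)] (s1 * s2)%g.
Proof.
apply/permP => -[i c]; rewrite permM !PmE /= permM ffunE permK; congr (_, _).
by rewrite addrAC addrA.
Qed.

Lemma Pm01 : Pm 0 1 = 1%g.
Proof. by apply/permP => -[i c]; rewrite PmE !perm1 /= ffunE addr0. Qed.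

Lemma Pm_Gp (x : {ffun P1 p -> 'F_3}) s : s \in Hp p -> \sum_i x i = 0 -> Pm x s \in Gp p.
Proof.
move=> hs hx; rewrite inE; apply/existsP; exists s; rewrite hs /=.
apply/existsP; exists x; rewrite hx eqxx /=; apply/forallP => ic; by rewrite PmE.
Qed.

Lemma Gp_Pm g : g \in Gp p -> exists (x : {ffun P1 p -> 'F_3}) s, [/\ s \in Hp p, \sum_i x i = 0 & g = Pm x s].
Proof.
rewrite inE => /existsP [s /andP [hs /existsP [x /andP [/eqP hx /forallP hg]]]].
exists x, s; split => //; apply/permP => ic; rewrite PmE; exact/eqP/hg.
Qed.

Lemma Hp_mul s1 s2 : s1 \in Hp p -> s2 \in Hp p -> (s1 * s2)%g \in Hp p.
Proof.
move=> /Hp_mlft [M1 h1 ->] /Hp_mlft [M2 h2 ->].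
rewrite lpermM ?h1 ?h2 ?oner_eq0 //; apply: Hp_lperm; by rewrite mdetM h1 h2 mulr1.
Qed.

Lemma Hp1 : 1%g \in Hp p.
Proof. rewrite -lperm1; apply: Hp_lperm; by rewrite /mdet /= mulr1 mulr0 subr0. Qed.

Lemma Gp_group_set : group_set (Gp p).
Proof.
apply/group_setP; split; first by rewrite -Pm01; apply: Pm_Gp; rewrite ?Hp1 // big1 // => i; rewrite ffunE.
move=> g h /Gp_Pm [x1 [s1 [hs1 hx1 ->]]] /Gp_Pm [x2 [s2 [hs2 hx2 ->]]].
rewrite PmM; apply: Pm_Gp; first exact: Hp_mul.
rewrite (eq_bigr (fun j => x2 j + x1 ((s2^-1)%g j))); last by move=> j _; rewrite ffunE.
rewrite big_split /= hx2 add0r (reindex_inj (@perm_inj _ s2)) /=.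
by rewrite (eq_bigr x1) // => j _; rewrite permK.
Qed.

Canonical Gp_group := group Gp_group_set.

End Perms.

Definition Lm (R : comNzRingType) (k : nat) (x : letter k) : mx4 R :=
  mmul (E21 (2 * (x.1 : nat)%:R)) (mmul (E12 (if x.2 then -2 else 2)) (E21 (- (2 * (x.1 : nat)%:R)))).
Definition matw (R : comNzRingType) (k : nat) (w : seq (letter k)) : mx4 R :=
  foldr (fun x M => mmul M (Lm R x)) (mid R) w.

Lemma Lm_det (R : comNzRingType) k (x : letter k) : mdet (Lm R x) = 1.
Proof. rewrite /Lm !mdetM /mdet /=; ring. Qed.
Lemma matw_det (R : comNzRingType) k (w : seq (letter k)) : mdet (matw R w) = 1.
Proof. elim: w => [|x w IH] /=; first by rewrite /mdet /=; ring. by rewrite mdetM IH Lm_det mulr1. Qed.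

Lemma mmap_Lm (R S : comNzRingType) (f : {rmorphism R -> S}) k (x : letter k) :
  mmap f (Lm R x) = Lm S x.
Proof.
rewrite /Lm !mmapM /mmap /E21 /E12 /= !rmorph0 !rmorph1 !rmorphN !rmorphM !rmorph_nat.
by case: (x.2); rewrite ?rmorphN rmorph_nat.
Qed.
Lemma mmap_matw (R S : comNzRingType) (f : {rmorphism R -> S}) k (w : seq (letter k)) :
  mmap f (matw R w) = matw S w.
Proof.
elim: w => [|x w IH] /=; first by rewrite /mmap /= rmorph0 rmorph1.
by rewrite mmapM IH mmap_Lm.
Qed.

(* ping-pong over int *)
Definition mv (M : mx4 int) (u : int * int) : int * int :=
  (m11 M * u.1 + m12 M * u.2, m21 M * u.1 + m22 M * u.2).
Lemma mvM M N u : mv (mmul M N) u = mv M (mv N u).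
Proof. case: M => ????; case: N => ????; case: u => ??; rewrite /mv /mmul /=; f_equal; ring. Qed.

Definition Rg (e : bool) (u : int * int) :=
  (`|u.2| < `|u.1|) && (if e then u.1 * u.2 <= 0 else 0 <= u.1 * u.2).
Definition Yg (u : int * int) := `|u.1| < `|u.2|.

Lemma stepA e u : Yg u || Rg e u -> Rg e (mv (E12 (if e then -2 else 2)) u).
Proof.
case: u => a b; rewrite /Yg /Rg /mv /=; case: e => /=; rewrite ?mul1r ?mul0r ?addr0.
- case/orP => [h|/andP [h1 h2]]; apply/andP; split; nia.
- case/orP => [h|/andP [h1 h2]]; apply/andP; split; nia.
Qed.

Lemma stepB (d : int) u : d != 0 -> `|u.2| < `|u.1| -> Yg (mv (E21 (2 * d)) u).
Proof.
case: u => a b; rewrite /Yg /mv /= mul1r mul0r addr0 => hd h.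
rewrite -normr_gt0 in hd; nia.
Qed.

Definition st k (x : letter k) (v : int * int) := mv (E21 (- (2 * (x.1 : nat)%:R))) v.
Definition applyw k (w : seq (letter k)) v := foldl (fun v y => mv (Lm int y) v) v w.

Lemma mv_matw k (w : seq (letter k)) v : mv (matw int w) v = applyw w v.
Proof.
elim: w v => [|x w IH] v /=; first by case: v => ??; rewrite /mv /=; f_equal; ring.
by rewrite mvM IH.
Qed.

Lemma st_step k (x y : letter k) v :
  st y (mv (Lm int y) v) =
  mv (E12 (if y.2 then -2 else 2)) (mv (E21 (2 * ((x.1 : nat)%:R - (y.1 : nat)%:R))) (st x v)).
Proof.
rewrite /st /Lm !mvM; case: v => a b; rewrite /mv /mmul /=; f_equal; ring.
Qed.

Lemma pp_ind k (w : seq (letter k)) (x : letter k) v :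
  reduced (x :: w) -> Rg x.2 (st x v) -> Rg (last x w).2 (st (last x w) (applyw w v)).
Proof.
elim: w x v => [|y w IH] x v //= /andP [hxy hred] hR.
apply: IH => //; rewrite (st_step x); apply: stepA.
have [e|ne] := eqVneq x.1 y.1.
- have e2 : x.2 = y.2 by move: hxy; rewrite e eqxx /=; case: (x.2) (y.2) => [] [].
  rewrite e subrr mulr0; move: hR; case: (st x v) => a b; rewrite /E21 /mv /= e2 => hR.
  by apply/orP; right; rewrite !mul1r !mul0r !addr0 add0r.
- apply/orP; left; apply: stepB; last by case/andP: hR.
  rewrite subr_eq0; apply: contra ne => /eqP h; apply/eqP/val_inj/eqP; by rewrite -(eqr_nat int) h.
Qed.

Lemma pingpong k (w : seq (letter k)) : reduced w -> w != [::] -> m12 (matw int w) != 0.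
Proof.
case: w => [|x w] // hred _; apply/negP => /eqP h0.
have := @pp_ind k w x (mv (Lm int x) (0, 1)) hred.
have -> : applyw w (mv (Lm int x) (0, 1)) = mv (matw int (x :: w)) (0, 1) by rewrite mv_matw.
have -> : st x (mv (Lm int x) (0, 1)) = mv (E12 (if x.2 then -2 else 2)) (0, 1).
  by rewrite /st /Lm !mvM /mv /=; f_equal; ring.
have hy : Yg (0, 1) by rewrite /Yg normr0 normr1 ltr01.
move/(_ (stepA (introT orP (or_introl hy)))).
rewrite /mv h0 /Rg /st /= !mulr0 !addr0 !mul0r !add0r !mulr1 !mul1r normr0.
by rewrite ltNge normr_ge0.
Qed.

Definition Nm (R : comNzRingType) (s : R) : mx4 R := MX (1 - 2 * s) s (- (4 * s)) (1 + 2 * s).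

Section Ident.
Variable F : fieldType.
Hypothesis h2 : (2 : F) != 0.
Lemma I1 (a b : F) : mmul (E12 a) (E12 b) = E12 (a + b).
Proof. rewrite /mmul /E12 /=; f_equal; ring. Qed.
Lemma I2 (a b : F) : mmul (Nm a) (Nm b) = Nm (a + b).
Proof. rewrite /mmul /Nm /=; f_equal; ring. Qed.
Lemma I3 (t : F) : E21 t = mmul (E12 (- (1/2))) (mmul (Nm (- (t / 4))) (E12 (1/2))).
Proof.
have e4 : (4 : F) = 2 * 2 by ring.
have h4 : (4 : F) != 0 by rewrite e4 mulf_neq0.
rewrite /mmul /Nm /E12 /E21 /=; f_equal; field; by rewrite ?h2 ?h4.
Qed.
Lemma I4 (M : mx4 F) : m21 M != 0 -> mdet M = 1 ->
  M = mmul (E12 ((m11 M - 1) / m21 M)) (mmul (E21 (m21 M)) (E12 ((m22 M - 1) / m21 M))).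
Proof.
case: M => a b c d /= hc; rewrite /mdet /= => hd.
rewrite /mmul /E12 /E21 /=; f_equal.
- by field.
- have -> : b = (a * d - 1) / c by rewrite -hd; field.
  by field.
- by field.
- by field.
Qed.
Lemma I5 (M : mx4 F) : M = mmul (E21 (-1)) (mmul (E21 1) M).
Proof. case: M => a b c d; rewrite /mmul /E21 /=; f_equal; ring. Qed.
End Ident.

Lemma Lm0 (R : comNzRingType) k (j : 'I_k) : (j : nat) = 0%N -> Lm R (j, false) = E12 2.
Proof. move=> hj; rewrite /Lm /= hj /mmul /E12 /E21 /=; f_equal; ring. Qed.
Lemma Lm1 (R : comNzRingType) k (j : 'I_k) : (j : nat) = 1%N -> Lm R (j, false) = Nm 2.
Proof. move=> hj; rewrite /Lm /= hj /mmul /Nm /E12 /E21 /=; f_equal; ring. Qed.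

Section Gen.
Variable p : nat.
Hypothesis h2 : (2 : 'F_p) != 0.

Definition Q (M : mx4 'F_p) := Pm 0 (lperm M).

Lemma ffun00 (s : {perm P1 p}) : [ffun j => (0 : {ffun P1 p -> 'F_3}) j + (0 : {ffun P1 p -> 'F_3}) (s j)] = 0.
Proof. by apply/ffunP => j; rewrite !ffunE addr0. Qed.

Lemma QM M N : mdet M != 0 -> mdet N != 0 -> (Q M * Q N)%g = Q (mmul N M).
Proof. by move=> hM hN; rewrite /Q PmM ffun00 lpermM. Qed.

Lemma Q1 : Q (mid _) = 1%g.
Proof. by rewrite /Q lperm1 Pm01. Qed.

Lemma detE12 (t : 'F_p) : mdet (E12 t) = 1.
Proof. rewrite /mdet /=; ring. Qed.
Lemma detE21 (t : 'F_p) : mdet (E21 t) = 1.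
Proof. rewrite /mdet /=; ring. Qed.
Lemma detNm (t : 'F_p) : mdet (Nm t) = 1.
Proof. rewrite /mdet /=; ring. Qed.
Lemma one_neq0 : (1 : 'F_p) != 0.
Proof. exact: oner_neq0. Qed.

Lemma Fp_half (t : 'F_p) : t = 2 * ((t / 2 : 'F_p) : nat)%:R.
Proof. by rewrite natr_Zp mulrC divfK. Qed.

Variable K : {group {perm (P1 p * 'F_3)}}.
Hypothesis hA : Q (E12 2) \in K.
Hypothesis hN : Q (Nm 2) \in K.

Lemma QE12 t : Q (E12 t) \in K.
Proof.
have H n : (Q (E12 2) ^+ n)%g = Q (E12 (2 * n%:R)).
  elim: n => [|n IH]; first by rewrite expg0 mulr0 -Q1.
  by rewrite expgS IH QM ?detE12 ?one_neq0 // I1 [n.+1%:R]mulrSr mulrDr mulr1.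
by rewrite (Fp_half t) -H groupX.
Qed.

Lemma QNm t : Q (Nm t) \in K.
Proof.
have H n : (Q (Nm 2) ^+ n)%g = Q (Nm (2 * n%:R)).
  elim: n => [|n IH].
    rewrite expg0 mulr0 -Q1; congr Q; rewrite /Nm /mid; f_equal; ring.
  by rewrite expgS IH QM ?detNm ?one_neq0 // I2 [n.+1%:R]mulrSr mulrDr mulr1.
by rewrite (Fp_half t) -H groupX.
Qed.

Lemma QE21 t : Q (E21 t) \in K.
Proof.
rewrite (I3 h2) -QM ?detE12 ?detNm ?mdetM ?detE12 ?detNm ?mulr1 ?one_neq0 //.
rewrite -QM ?detE12 ?detNm ?one_neq0 //.
by rewrite !groupM ?QE12 ?QNm.
Qed.

Lemma QSL M : mdet M = 1 -> Q M \in K.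
Proof.
move=> hM.
have gen M' : mdet M' = 1 -> m21 M' != 0 -> Q M' \in K.
  move=> h1 hc; rewrite (I4 hc h1) -QM ?detE12 ?mdetM ?detE21 ?detE12 ?mulr1 ?one_neq0 //.
  rewrite -QM ?detE12 ?detE21 ?one_neq0 //.
  by rewrite !groupM ?QE12 ?QE21.
have [c0|c0] := eqVneq (m21 M) 0; last exact: gen.
rewrite (I5 M) -QM ?detE21 ?mdetM ?detE21 ?hM ?mulr1 ?one_neq0 //.
rewrite groupM ?QE21 // gen ?mdetM ?detE21 ?hM ?mulr1 //.
move: hM c0; case: M => a b c d; rewrite /mdet /mmul /= => hM c0; rewrite c0 in hM *.
rewrite mul1r mulr0 addr0; apply/eqP => ha; move: hM; rewrite ha mul0r mulr0 subr0 => /eqP.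
by rewrite eq_sym oner_eq0.
Qed.
End Gen.

Definition delta p (i : P1 p) : {ffun P1 p -> 'F_3} := [ffun j => (j == i)%:R].
Definition y0 p := delta (Some (0 : 'F_p)) - delta None.
Definition gen k p (j : 'I_k) : {perm (P1 p * 'F_3)} :=
  Pm (if (j : nat) == 2%N then y0 p else 0) (lperm (Lm 'F_p (j, false))).

Section Tr.
Variable p : nat.
Definition Tr (x : {ffun P1 p -> 'F_3}) := Pm x 1.

Lemma TrM x y : (Tr x * Tr y)%g = Tr (y + x).
Proof. rewrite /Tr PmM mulg1; congr Pm; apply/ffunP => j; by rewrite !ffunE invg1 perm1. Qed.

Lemma Tr0 : Tr 0 = 1%g.
Proof. exact: Pm01. Qed.

Lemma Pm_split x M : Pm x (lperm M) = (Q M * Tr x)%g.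
Proof. rewrite /Q /Tr PmM mulg1; congr Pm; apply/ffunP => j; by rewrite !ffunE addr0. Qed.

Lemma conjTr M y : mdet M = 1 ->
  (Q (madj M) * Tr y * Q M)%g = Tr [ffun j => y ((lperm M)^-1%g j)].
Proof.
move=> h; rewrite /Q /Tr !PmM mulg1 lpermM ?madj_det ?h ?oner_eq0 // madjM' h.
congr Pm; first by apply/ffunP => j; rewrite !ffunE !addr0 add0r.
by rewrite -lperm1.
Qed.

Lemma delta_conj M (a b : P1 p) : mdet M = 1 ->
  [ffun j => (delta a - delta b) ((lperm M)^-1%g j)] = delta (lperm M a) - delta (lperm M b).
Proof.
move=> h; apply/ffunP => j; rewrite !ffunE /=.
by rewrite -!(canF_eq (permKV (lperm M))).
Qed.

Lemma two_trans (i j : P1 p) : i != j ->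
  exists M, [/\ mdet M = 1, mlft M (Some 0) = i & mlft M None = j].
Proof.
case: i => [u|]; case: j => [v|] // hij.
- have hvu : v - u != 0 by rewrite subr_eq0; apply: contra hij => /eqP ->.
  exists (MX (v / (v - u)) u (1 / (v - u)) 1); split.
  + by rewrite /mdet /=; field.
  + by rewrite /mlft /= mulr0 add0r oner_eq0 mulr0 add0r divr1.
  + rewrite /mlft /= mul1r invr_eq0 (negbTE hvu); congr Some; by rewrite invrK divfK.
- exists (MX 1 u 0 1); split.
  + by rewrite /mdet /= mulr1 mulr0 subr0.
  + by rewrite /mlft /= ?mulr0 ?add0r ?oner_eq0 ?mulr0 ?add0r ?divr1.
  + by rewrite /mlft /= ?eqxx.
- exists (MX v (-1) 1 0); split.
  + by rewrite /mdet /= mulr0 mulr1 sub0r opprK.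
  + by rewrite /mlft /= ?mulr0 ?add0r ?eqxx.
  + by rewrite /mlft /= ?oner_eq0 ?divr1.
Qed.
End Tr.

Section Generation.
Variables (p k : nat).
Hypothesis h2 : (2 : 'F_p) != 0.
Hypothesis hk : (3 <= k)%N.

Lemma sum_delta (i : P1 p) : \sum_j delta i j = 1.
Proof.
rewrite (bigD1 i) //= ffunE eqxx mulr1n big1 ?addr0 // => j hj; by rewrite ffunE (negbTE hj).
Qed.
Lemma sum_y0 : \sum_i y0 p i = 0.
Proof.
rewrite /y0 (eq_bigr (fun i => delta (Some 0) i - delta None i)); last by move=> i _; rewrite !ffunE.
by rewrite sumrB !sum_delta subrr.
Qed.


Lemma gen_Gp (j : 'I_k) : gen p j \in Gp p.
Proof.
apply: Pm_Gp; first by apply: Hp_lperm; apply: Lm_det.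
by case: eqP => _; rewrite ?sum_y0 // big1 // => i _; rewrite ffunE.
Qed.

Let K := <<[set gen p j | j : 'I_k]>>%G.

Lemma genK (j : 'I_k) : gen p j \in K.
Proof. by apply: mem_gen; apply: imset_f. Qed.

Let j0 : 'I_k := Ordinal (leq_trans (isT : 0 < 3)%N hk).
Let j1 : 'I_k := Ordinal (leq_trans (isT : 1 < 3)%N hk).
Let j2 : 'I_k := Ordinal (leq_trans (isT : 2 < 3)%N hk).

Lemma KA : Q (E12 2) \in K.
Proof. have := genK j0; by rewrite /gen /= (@Lm0 _ _ j0 erefl). Qed.
Lemma KN : Q (Nm 2) \in K.
Proof. have := genK j1; by rewrite /gen /= (@Lm1 _ _ j1 erefl). Qed.

Lemma KQ M : mdet M = 1 -> Q M \in K.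
Proof. move=> hM; exact: (@QSL p h2 K KA KN M hM). Qed.

Lemma Ky0 : Tr (y0 p) \in K.
Proof.
have := genK j2; rewrite /gen /= Pm_split => h.
have := groupM (groupVr (KQ (Lm_det _ (j2, false)))) h; by rewrite mulKg.
Qed.

Lemma Kdelta (i j : P1 p) : Tr (delta i - delta j) \in K.
Proof.
have [->|hij] := eqVneq i j; first by rewrite subrr Tr0 group1.
have [M [hM hi hj]] := two_trans hij.
have hM' : mdet (madj M) = 1 by rewrite madj_det.
have := groupM (groupM (KQ hM') Ky0) (KQ hM).
rewrite conjTr // delta_conj // !lpermE ?hM ?oner_eq0 //.
by rewrite hi hj.
Qed.

Lemma Ksum (x : {ffun P1 p -> 'F_3}) : \sum_i x i = 0 -> Tr x \in K.
Proof.
move=> hx.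
have -> : x = \sum_i (delta i - delta None) *+ (x i : nat).
  apply/ffunP => j; rewrite sum_ffunE.
  rewrite (eq_bigr (fun i => ((j == i)%:R - (j == None)%:R) * x i)); last first.
    by move=> i _; rewrite ffunMnE !ffunE -[_ *+ (x i : nat)]mulr_natr natr_Zp.
  rewrite (eq_bigr (fun i => (j == i)%:R * x i - (j == None)%:R * x i)); last by move=> i _; rewrite mulrBl.
  rewrite sumrB -mulr_sumr hx mulr0 subr0 (bigD1 j) //= eqxx mul1r big1 ?addr0 //.
  by move=> i hi; rewrite eq_sym (negbTE hi) mul0r.
apply: (big_ind (fun v => Tr v \in K)).
- by rewrite Tr0 group1.
- by move=> a b ha hb; rewrite addrC -TrM groupM.
- move=> i _; elim: (x i : nat) => [|n IH]; first by rewrite mulr0n Tr0 group1.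
  by rewrite mulrS addrC -TrM groupM // Kdelta.
Qed.

Lemma generation : <<[set gen p j | j : 'I_k]>>%g = Gp p.
Proof.
apply/eqP; rewrite eqEsubset; apply/andP; split.
- rewrite gen_subG; apply/subsetP => g /imsetP [j _ ->]; exact: gen_Gp.
- apply/subsetP => g /Gp_Pm [x [s [hs hx ->]]].
  have [M hM ->] := Hp_mlft hs.
  by rewrite Pm_split groupM ?KQ ?Ksum.
Qed.
End Generation.

Definition Tset p : {set {perm (P1 p * 'F_3)}} := [set z in Gp p | (z (None, 0)).2 == 1].

Section Counting.
Variable p : nat.
Hypothesis hp : prime p.

Lemma Gp_shift z i (c d : 'F_3) : z \in Gp p -> z (i, c + d) = ((z (i, c)).1, (z (i, c)).2 + d).
Proof. by case/Gp_Pm => x [s [_ _ ->]]; rewrite !PmE /= addrAC. Qed.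


Definition Tc (c : 'F_3) := [set z in Gp p | (z (None, 0)).2 == c].
Definition tv : {ffun P1 p -> 'F_3} := delta None - delta (Some 0).

Lemma tau_Gp : Tr tv \in Gp p.
Proof.
apply: Pm_Gp; first exact: Hp1.
rewrite /tv (eq_bigr (fun i => delta None i - delta (Some 0) i)); last by move=> i _; rewrite !ffunE.
by rewrite sumrB !sum_delta subrr.
Qed.

Lemma Tc_step c : (#|Tc c| <= #|Tc (c + 1)%R|)%N.
Proof.
rewrite -(card_lcoset (Tc c) (Tr tv)); apply: subset_leq_card; apply/subsetP => w.
rewrite mem_lcoset inE => /andP [hz /eqP hc].
have hw : w = (Tr tv * ((Tr tv)^-1 * w))%g by rewrite mulKVg.
have hwG : w \in Gp p by rewrite hw groupM //; exact: tau_Gp.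
rewrite inE hwG /=; rewrite {1}hw permM /Tr PmE perm1 /= !ffunE /=.
have -> : (0 + (1 - 0) : 'F_3) = 0 + 1 by rewrite subr0.
by rewrite -/(Tr tv) Gp_shift // hc.
Qed.

Lemma Tc_le c d : (#|Tc c| <= #|Tc d|)%N.
Proof.
have H m : (#|Tc c| <= #|Tc (c + m%:R)%R|)%N.
  elim: m => [|m IH]; first by rewrite addr0.
  apply: (leq_trans IH); rewrite mulrSr addrA; exact: Tc_step.
by have := H (d - c : 'F_3); rewrite natr_Zp addrC subrK.
Qed.

Lemma card_Gp_T : #|Gp p| = (3 * #|Tset p|)%N.
Proof.
rewrite -sum1_card (partition_big (fun z : {perm (P1 p * 'F_3)} => (z (None, 0)).2) xpredT) //=.
rewrite (eq_bigr (fun c => #|Tc c|)); last first.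
  move=> c _; rewrite -sum1_card; apply: eq_bigl => z; by rewrite [z \in Tc c]inE.
rewrite (eq_bigr (fun c => #|Tc 1|)); last first.
  by move=> c _; apply/eqP; rewrite eqn_leq !Tc_le.
by rewrite sum_nat_const card_Fp.
Qed.

Definition Fi (i : P1 p) := [set z in Gp p | (z (None, 0)).1 == i].

Lemma Q_Gp M : mdet M = 1 -> Q M \in Gp p.
Proof. by move=> h; apply: Pm_Gp; [apply: Hp_lperm | rewrite big1 // => i _; rewrite ffunE]. Qed.

Lemma Fi_step M i : mdet M = 1 -> (#|Fi i| <= #|Fi (mlft M i)|)%N.
Proof.
move=> hM; rewrite -(card_rcoset (Fi i) (Q M)); apply: subset_leq_card; apply/subsetP => w.
rewrite mem_rcoset inE => /andP [hz /eqP hc].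
have hw : w = ((w * (Q M)^-1) * Q M)%g by rewrite mulgKV.
have hwG : w \in Gp p by rewrite hw groupM //; exact: Q_Gp.
by rewrite inE hwG /= {1}hw permM /Q PmE /= -/(Q M) hc lpermE // hM oner_eq0.
Qed.

Lemma Fi_eq i : #|Fi i| = #|Fi None|.
Proof.
have [o ho] : exists o : P1 p, o != i by case: i => [x|]; [exists None | exists (Some 0)].
have [M [hM _ hN]] := two_trans ho.
apply/eqP; rewrite eqn_leq; apply/andP; split.
- have := Fi_step i (M := madj M); rewrite madj_det hM -hN mlft_can ?hM ?oner_eq0 //.
  by apply.
- by have := Fi_step None hM; rewrite hN; apply.
Qed.

Lemma card_Gp_F : #|Gp p| = (p.+1 * #|Fi None|)%N.
Proof.
rewrite -sum1_card (partition_big (fun z : {perm (P1 p * 'F_3)} => (z (None, 0)).1) xpredT) //=.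
rewrite (eq_bigr (fun i => #|Fi i|)); last first.
  move=> i _; rewrite -sum1_card; apply: eq_bigl => z; by rewrite [z \in Fi i]inE.
rewrite (eq_bigr (fun i => #|Fi None|)); last by move=> i _; rewrite Fi_eq.
by rewrite sum_nat_const card_option card_Fp.
Qed.
End Counting.

Section Symdiff.
Variables (p k : nat).
Hypothesis hp : prime p.

Lemma gen_act (j : 'I_k) (w : {perm (P1 p * 'F_3)}) :
  ((w * gen p j)%g (None, 0)) =
  (lperm (Lm 'F_p (j, false)) (w (None, 0)).1,
   (w (None, 0)).2 + (if (j : nat) == 2%N then y0 p else 0) (lperm (Lm 'F_p (j, false)) (w (None, 0)).1)).
Proof. by rewrite permM /gen PmE. Qed.

Lemma gen_Gp' (j : 'I_k) : gen p j \in Gp p.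
Proof.
apply: Pm_Gp; first by apply: Hp_lperm; apply: Lm_det.
by case: eqP => _; rewrite ?sum_y0 // big1 // => i _; rewrite ffunE.
Qed.

Lemma symdiff_sub (j : 'I_k) :
  symdiff (Tset p :* gen p j)%g (Tset p) \subset Fi (Some (0 : 'F_p)) :|: Fi (None : P1 p).
Proof.
apply/subsetP => z hz.
set g := gen p j; set y := (if (j : nat) == 2%N then y0 p else 0).
have hg : g \in Gp p by exact: gen_Gp'.
have hzw : z = ((z * g^-1) * g)%g by rewrite mulgKV.
set w := (z * g^-1)%g in hzw.
have key : (z (None, 0)).2 = (w (None, 0)).2 + y ((z (None, 0)).1).
  by rewrite {1 2}hzw gen_act.
have hyz : (z \in Gp p) && (y ((z (None, 0)).1) != 0).
  have memT u : (u \in Tset p) = (u \in Gp p) && ((u (None, 0)).2 == 1) by rewrite inE.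
  move: hz; rewrite /symdiff in_setU !in_setD mem_rcoset !memT -/w.
  case/orP => /andP [h1 h2].
  - case/andP: h2 => hwG /eqP hw1.
    have hzG : z \in Gp p by rewrite hzw groupM.
    rewrite hzG /=; move: h1; rewrite hzG /= key hw1.
    by apply: contra => /eqP ->; rewrite addr0.
  - case/andP: h2 => hzG /eqP hz1.
    have hwG : w \in Gp p by rewrite /w groupM // groupV.
    rewrite hzG /=; move: h1; rewrite hwG /=.
    apply: contra => /eqP hy0; by rewrite -hz1 key hy0 addr0.
case/andP: hyz => hzG; rewrite /y; case: ifP => _; last by rewrite ffunE eqxx.
have memF i u : (u \in Fi i) = (u \in Gp p) && ((u (None, 0)).1 == i) by rewrite inE.
rewrite /y0 !ffunE in_setU !memF hzG /=.
set i := (z (None, 0)).1.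
by case: (i == Some 0); case: (i == None) => //=; rewrite subrr eqxx.
Qed.

Lemma symdiff_card (j : 'I_k) :
  (#|symdiff (Tset p :* gen p j)%g (Tset p)| <= 2 * #|Fi (None : P1 p)|)%N.
Proof.
apply: (leq_trans (subset_leq_card (symdiff_sub j))).
rewrite cardsU (Fi_eq (Some 0)); apply: (leq_trans (leq_subr _ _)); by rewrite addnn -mul2n.
Qed.
End Symdiff.

Lemma madjLm (R : comNzRingType) k (j : 'I_k) : madj (Lm R (j, false)) = Lm R (j, true).
Proof. rewrite /madj /Lm /mmul /E12 /E21 /=; f_equal; ring. Qed.

Section Faithful.
Variables (p k : nat).

Lemma Lm_det0 (x : letter k) : mdet (Lm 'F_p x) != 0.
Proof. by rewrite Lm_det oner_eq0. Qed.

Lemma gen_fst (j : 'I_k) ic : (gen p j ic).1 = mlft (Lm 'F_p (j, false)) ic.1.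
Proof. by rewrite /gen PmE /= lpermE // Lm_det0. Qed.

Lemma genV_fst (j : 'I_k) ic : ((gen p j)^-1%g ic).1 = mlft (Lm 'F_p (j, true)) ic.1.
Proof.
have : (gen p j ((gen p j)^-1%g ic)).1 = ic.1 by rewrite permKV.
rewrite gen_fst => <-; by rewrite -madjLm mlft_can // Lm_det0.
Qed.

Lemma eval_fst (w : seq (letter k)) ic :
  (eval_word (gen p) w ic).1 = mlft (matw 'F_p w) ic.1.
Proof.
rewrite /eval_word; elim: w ic => [|x w IH] ic.
  by rewrite big_nil perm1 lft_id.
rewrite big_cons permM IH /= -lft_comp ?Lm_det0 //; congr mlft.
by case: x => j [] /=; rewrite ?genV_fst ?gen_fst.
Qed.

Hypothesis hp : prime p.

Lemma intr_Fp0 (z : int) : (z%:~R : 'F_p) = 0 -> (`|z| < p)%N -> z = 0.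
Proof.
have H n : (n%:R : 'F_p) = 0 -> (n < p)%N -> n = 0%N.
  move=> h hn; have := val_Fp_nat hp n; rewrite h modn_small //= => e; by rewrite -e.
case: z => n /=.
- move=> h hn; exact: (congr1 Posz (H n h hn)).
- rewrite NegzE mulrNz => /eqP; rewrite oppr_eq0 => /eqP h hn.
  by have := H n.+1 h hn.
Qed.

Lemma faithful (w : seq (letter k)) : reduced w -> w != [::] ->
  (`|m12 (matw int w)|.+1 <= p)%N -> eval_word (gen p) w != 1%g.
Proof.
move=> hred hne hN; apply/eqP => h1.
have := eval_fst w (Some 0, 0); rewrite h1 perm1 /= /mlft -(mmap_matw intr) /mmap /=.
rewrite mulr0 add0r; case: ifP => // hd /Some_inj /esym /eqP.
rewrite mulr0 add0r mulf_eq0 invr_eq0 hd orbF => /eqP h.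
by have := pingpong hred hne; rewrite (intr_Fp0 h hN) eqxx.
Qed.
End Faithful.

Lemma two_neq0 p : prime p -> (p %% 3 = 1)%N -> (2 : 'F_p) != 0.
Proof.
move=> hp h3; have p2 : p != 2%N by apply/eqP => e; rewrite e in h3.
have pg : (2 < p)%N by have := prime_gt1 hp; rewrite leq_eqVlt eq_sym (negbTE p2).
apply/eqP => h; have := val_Fp_nat hp 2; rewrite h modn_small //.
Qed.

Lemma sqrt_le (n : nat) : sqrtC (n%:R : algC) <= n.+1%:R.
Proof.
rewrite -[X in _ <= X]sqrCK ?ler0n // ler_sqrtC ?qualifE /= ?ler0n ?exprn_ge0 //.
by rewrite -natrX ler_nat; nia.
Qed.

Unset Implicit Arguments.
Theorem lemma3p5 (k : nat) (hk : (3 <= k)%N) :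
  exists C : algC, 0 < C /\
  exists p0 : nat,
  exists F : forall p : nat,
      ('I_k -> {perm (P1 p * 'F_3)}) * {set {perm (P1 p * 'F_3)}},
    (forall p : nat, (p0 <= p)%N -> prime p -> (p %% 3 = 1)%N ->
       let g := (F p).1 in let T := (F p).2 in
       [/\ <<[set g j | j : 'I_k]>>%g = Gp p,
           T \subset Gp p,
           1 / 243%:R <= (#|T|%:R / #|Gp p|%:R : algC),
           (#|T|%:R / #|Gp p|%:R : algC) <= 1 / 3%:R
         & forall j : 'I_k,
           (#|symdiff (T :* g j)%g T|%:R : algC)
             <= C / sqrtC (p%:R) * #|Gp p|%:R]) /\
    (forall w : seq (letter k), reduced w -> w != [::] ->
       exists N : nat, forall p : nat, (N <= p)%N -> prime p -> (p %% 3 = 1)%N ->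
         eval_word (F p).1 w != 1%g).
Proof.
exists 2; split; first by rewrite ltr0n.
exists 0%N; exists (fun p => (@gen k p, Tset p)); split.
- move=> p _ hp h3 /=.
  have h2 := two_neq0 hp h3.
  have hT : #|Gp p| = (3 * #|Tset p|)%N by apply: card_Gp_T.
  have hG0 : (0 < #|Gp p|)%N by apply/card_gt0P; exists 1%g; apply: (group1 (Gp_group p)).
  have hT0 : (#|Tset p|%:R : algC) != 0.
    by rewrite pnatr_eq0 -lt0n; move: hG0; rewrite hT muln_gt0 => /andP [].
  have hr : (#|Tset p|%:R / #|Gp p|%:R : algC) = 1 / 3%:R.
    by rewrite hT natrM invfM [_^-1 * _^-1]mulrC mulrA divff // mul1r div1r.
  split.
  + exact: generation.
  + by apply/subsetP => z; rewrite inE => /andP [].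
  + rewrite hr !div1r lef_pV2 ?qualifE /= ?ltr0n // ler_nat //.
  + by rewrite hr.
  + move=> j.
    have hs := @symdiff_card p k j.
    have hF := card_Gp_F hp.
    apply: (le_trans (y := (2 * #|Fi (None : P1 p)|)%N%:R)); first by rewrite ler_nat.
    rewrite hF natrM natrM mulrA [_ * (p.+1%:R)]mulrC -mulrA mulrCA.
    set F := (#|Fi (None : P1 p)|%:R : algC).
    have hsq : 0 < sqrtC (p%:R : algC) by rewrite sqrtC_gt0 ltr0n prime_gt0.
    have -> : 2 / sqrtC p%:R * (p.+1%:R * F) = (2 * F) * (p.+1%:R / sqrtC p%:R) by ring.
    apply: ler_peMr; first by rewrite mulr_ge0 ?ler0n.
    by rewrite ler_pdivlMr // mul1r sqrt_le.
- move=> w hred hne; exists (`|m12 (matw int w)|.+1)%N => p hN hp _ /=.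
  exact: faithful.
Qed.
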